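(* Let $\alpha,\beta$ be relatively prime positive integers and let $n$ be a positive integer with $s(n)=s$. Then there exist no integers $a',b'\ge1$ with $n=a'g_s+\beta b'g_{s-1}$. Moreover, a pair $(b,a)$ is $n$-good if and only if $n=ag_{s-1}+\beta b g_{s-2}$ and $a,b\ge1$.
   Context: The $(\alpha,\beta)$-walk $w_k(a_1,a_2)$ for positive integers $a_1,a_2$ is given by $w_1=a_1$, $w_2=a_2$, $w_{k+2}=\alpha w_{k+1}+\beta w_k$ ($k\ge1$). For a positive integer $n$, $s(n;a_1,a_2)$ is the (largest) index $s$ with $w_s(a_1,a_2)=n$ ($-\infty$ if none), and $s(n)=\max_{a_1,a_2\ge1}s(n;a_1,a_2)$. A pair $(a_1,a_2)$ with $a_1,a_2\ge1$ is $n$-good if $s(n;a_1,a_2)=s(n)$. The sequence $g_k$: $g_0=0$, $g_1=1$, $g_2=\alpha$, $g_{k+2}=\alpha g_{k+1}+\beta g_k$ for $k\ge1$. *)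

(* Defs.v *)
From mathcomp Require Import all_boot.
Set Implicit Arguments. Unset Strict Implicit. Unset Printing Implicit Defensive.

(* Consecutive pairs (w_{k+1}, w_{k+2}) of the (alpha,beta)-walk. *)
Fixpoint walk_pair (alpha beta a1 a2 k : nat) : nat * nat :=
  match k with
  | 0 => (a1, a2)
  | k'.+1 => let: (x, y) := walk_pair alpha beta a1 a2 k' in
             (y, alpha * y + beta * x)
  end.

(* w_k(a1,a2) for k >= 1: w_1 = a1, w_2 = a2, w_{k+2} = alpha w_{k+1} + beta w_k.
   (The value at k = 0 is irrelevant and never used.) *)
Definition walk (alpha beta a1 a2 k : nat) : nat :=
  (walk_pair alpha beta a1 a2 k.-1).1.

(* g_0 = 0, g_1 = 1, g_2 = alpha, g_{k+2} = alpha g_{k+1} + beta g_k. *)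
Definition g (alpha beta k : nat) : nat := (walk_pair alpha beta 0 1 k).1.

Definition s_pair_is (alpha beta n a1 a2 t : nat) : Prop :=
  1 <= t /\ walk alpha beta a1 a2 t = n /\
  (forall k, 1 <= k -> walk alpha beta a1 a2 k = n -> k <= t).

(* s(n) = s : the maximum of s(n; a1, a2) over all a1, a2 >= 1
   (pairs with s(n;a1,a2) = -oo contribute nothing). *)
Definition s_is (alpha beta n s : nat) : Prop :=
  (exists a1 a2, 1 <= a1 /\ 1 <= a2 /\ s_pair_is alpha beta n a1 a2 s) /\
  (forall a1 a2 t, 1 <= a1 -> 1 <= a2 -> s_pair_is alpha beta n a1 a2 t -> t <= s).

Definition n_good (alpha beta n a1 a2 : nat) : Prop :=
  1 <= a1 /\ 1 <= a2 /\
  exists s, s_is alpha beta n s /\ s_pair_is alpha beta n a1 a2 s.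

(* Main.v *)
Require Import Defs.
From mathcomp Require Import all_boot.
From mathcomp Require Import zify.

Section S.
Variables alpha beta : nat.
Let W a1 a2 k := (walk_pair alpha beta a1 a2 k).1.

Lemma Wrec a1 a2 k : W a1 a2 k.+2 = alpha * W a1 a2 k.+1 + beta * W a1 a2 k.
Proof. rewrite /W /=; by case: (walk_pair alpha beta a1 a2 k). Qed.

Lemma Wlin a1 a2 k :
  W a1 a2 k.+1 = a2 * g alpha beta k.+1 + beta * a1 * g alpha beta k.
Proof.
have: W a1 a2 k.+1 = a2 * g alpha beta k.+1 + beta * a1 * g alpha beta k /\
      W a1 a2 k.+2 = a2 * g alpha beta k.+2 + beta * a1 * g alpha beta k.+1.
  elim: k => [|k [IH1 IH2]].
    rewrite /W /g /=; split; nia.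
  split; first exact IH2.
  have e2 := Wrec 0 1 k; rewrite /W in e2.
  rewrite Wrec IH1 IH2 /g -/(W 0 1 k.+3) Wrec /W e2; move: (walk_pair alpha beta 0 1 k.+1).1 (walk_pair alpha beta 0 1 k).1 => x y; nia.
by case.
Qed.

Lemma Wpos a1 a2 k : 0 < alpha -> 0 < beta -> 1 <= a1 -> 1 <= a2 -> 1 <= W a1 a2 k.
Proof.
move=> ha hb h1 h2.
have: 1 <= W a1 a2 k /\ 1 <= W a1 a2 k.+1.
  elim: k => [|k [IH1 IH2]]; first by rewrite /W /=.
  split=> //; rewrite Wrec; nia.
by case.
Qed.

Lemma Wmono a1 a2 i d : 0 < alpha -> 0 < beta -> 1 <= a1 -> 1 <= a2 -> 1 <= i ->
  W a1 a2 i < W a1 a2 (i + d.+1).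
Proof.
move=> ha hb h1 h2 hi; elim: d => [|d IH].
  case: i hi => // i _; rewrite addn1 Wrec.
  have := Wpos a1 a2 i ha hb h1 h2; have := Wpos a1 a2 i.+1 ha hb h1 h2; nia.
rewrite addnS; case: i hi IH => // i _ IH.
rewrite addSn Wrec -addSn.
have := Wpos a1 a2 (i+d.+1) ha hb h1 h2; nia.
Qed.

Lemma spair n a1 a2 t : 0 < alpha -> 0 < beta -> 1 <= a1 -> 1 <= a2 -> 2 <= t ->
  walk alpha beta a1 a2 t = n -> s_pair_is alpha beta n a1 a2 t.
Proof.
move=> ha hb h1 h2 ht hw; split; first lia; split=> // k hk hwk.
rewrite leqNgt; apply/negP => ltk.
have := Wmono a1 a2 (t.-1) (k - t).-1 ha hb h1 h2 (ltac:(lia)).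
have -> : t.-1 + (k - t).-1.+1 = k.-1 by lia.
rewrite /W; move: hw hwk; rewrite /walk => -> ->; lia.
Qed.

End S.

Theorem corollary2p3 (alpha beta n s : nat) :
  0 < alpha -> 0 < beta -> coprime alpha beta -> 0 < n ->
  s_is alpha beta n s ->
  (~ exists a' b', 1 <= a' /\ 1 <= b' /\
       n = a' * g alpha beta s + beta * b' * g alpha beta (s - 1)) /\
  (forall a b, n_good alpha beta n b a <->
     (n = a * g alpha beta (s - 1) + beta * b * g alpha beta (s - 2) /\
      1 <= a /\ 1 <= b)).
Proof.
move=> ha hb _ hn hS; have [[x1 [x2 [hx1 [hx2 hs1]]]] hmax] := hS.
have Hw : forall a1 a2 k, walk alpha beta a1 a2 k.+2 =
    a2 * g alpha beta k.+1 + beta * a1 * g alpha beta k.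
  by move=> a1 a2 k; rewrite /walk /=; exact: Wlin.
have s2 : 2 <= s.
  apply: (hmax 1 n 2) => //; apply: spair => //.
split.
  move=> [a' [b' [h1 [h2 he]]]].
  suff : s.+1 <= s by rewrite ltnn.
  apply: (hmax b' a' s.+1 h2 h1); apply: spair => //; first by lia.
  rewrite (_ : s.+1 = (s-1).+2); last by lia.
  by rewrite Hw (_ : (s-1).+1 = s) //; lia.
move=> a b; split.
  move=> [h1 [h2 [s' [hs' hp]]]].
  have e : s' = s.
    apply/eqP; rewrite eqn_leq; apply/andP; split.
      exact: (hmax b a s' h1 h2 hp).
    exact: (hs'.2 x1 x2 s hx1 hx2 hs1).
  subst s'; case: hp => _ [hp _].
  move: hp; rewrite (_ : s = (s-2).+2); last by lia.
  rewrite Hw (_ : (s-2).+2-1 = (s-2).+1); last by lia.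
  rewrite (_ : (s-2).+2-2 = s-2); last by lia.
  by move=> <-.
move=> [he [h1 h2]]; split=> //; split=> //; exists s; split=> //.
apply: spair => //.
move: he; rewrite (_ : s = (s-2).+2); last by lia.
rewrite Hw (_ : (s-2).+2-1 = (s-2).+1); last by lia.
rewrite (_ : (s-2).+2-2 = s-2); last by lia.
by move=> ->.
Qed.
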